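(* Let $G$ be a graph, let $R\subseteq V(G)$ be the vertex set of an induced copy of $P_3$ in $G$, and let $C\subseteq V(G)\setminus R$ be a clique in $G$ with at most two vertices, each of odd degree in $G$. Assume every vertex of $R$ is adjacent to every vertex of $C$. Then one can admissibly remove from $G$ a subset of $C\cup R$ containing all of $C$, such that the remaining vertices of $R$ form a clique with at most two vertices, each of odd degree in the remaining graph.
   Context: $P_3$ denotes the path with three edges (four vertices). Removing a set $T$ of vertices from a graph $G$ is a simple admissible removal if $T$ is an independent set in $G$ and the number of edges between $T$ and $V(G)\setminus T$ is even. Removing a set of vertices is admissible if it can be realised by a sequence of simple admissible removals, each performed in the graph remaining after the previous ones. Degrees are always taken in the current remaining graph. *)

(* Defs.v *)
(* A (finite, simple) graph G is a finType T of vertices with a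
   symmetric irreflexive adjacency relation e. A "remaining graph" is the
   induced subgraph of G on a vertex set S : {set T}. *)
From mathcomp Require Import all_boot.
Set Implicit Arguments. Unset Strict Implicit. Unset Printing Implicit Defensive.

Section Graphs.
Variable T : finType.
Variable e : rel T.

Definition deg_in (S : {set T}) (v : T) : nat := #|[set u in S | e v u]|.

Definition independent_in (S X : {set T}) : Prop :=
  X \subset S /\ forall x y, x \in X -> y \in X -> ~~ e x y.

Definition cut_size (S X : {set T}) : nat :=
  #|[set p : T * T | (p.1 \in X) && (p.2 \in S :\: X) && e p.1 p.2]|.

Definition simple_admissible (S X : {set T}) : Prop :=
  independent_in S X /\ ~~ odd (cut_size S X).

Inductive admissible : {set T} -> {set T} -> Prop :=
  | adm_nil S : admissible S set0
  | adm_cons S Y X : simple_admissible S Y -> admissible (S :\: Y) X ->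
                     admissible S (Y :|: X).

Definition clique (X : {set T}) : Prop :=
  forall x y, x \in X -> y \in X -> x != y -> e x y.

Definition induced_P3 (R : {set T}) : Prop :=
  exists a b c d : T,
    [/\ R = [set a; b; c; d], uniq [:: a; b; c; d],
        [/\ e a b, e b c & e c d] &
        [/\ ~~ e a c, ~~ e b d & ~~ e a d]].

End Graphs.

(* Main.v *)
Require Import Defs.
From mathcomp Require Import all_boot.
Set Implicit Arguments. Unset Strict Implicit. Unset Printing Implicit Defensive.

Definition adjA (u v : nat) : bool :=
  if (u < 4) && (v < 4) then (u == v.+1) || (v == u.+1) else u != v.
Definition par (p : nat -> bool) (Z : seq nat) u := p u (+) odd (count (adjA u) Z).
Definition valid (m : nat) (p : nat -> bool) (Z Y : seq nat) : bool :=
  [&& all (fun u => u < m) Y, all (fun u => u \notin Z) Y, uniq Y,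
      all (fun u => all (fun v => ~~ adjA u v) Y) Y &
      ~~ odd (count (par p Z) Y)].
Definition final (m : nat) (p : nat -> bool) (Z : seq nat) : bool :=
  let Rem := [seq u <- iota 0 4 | u \notin Z] in
  [&& all (fun u => u \in Z) (iota 4 (m-4)), size Rem <= 2,
      all (fun u => all (fun v => (u==v) || adjA u v) Rem) Rem &
      all (par p Z) Rem].
Fixpoint checkp m p Z (pl : seq (seq nat)) : bool :=
  match pl with [::] => final m p Z | Y :: pl' => valid m p Z Y && checkp m p (Z ++ Y) pl' end.
Definition pvec (b0 b1 b2 b3 : bool) (u : nat) : bool := nth true [:: b0; b1; b2; b3] u.
Definition plan (n : nat) (b0 b1 b2 b3 : bool) : seq (seq nat) :=
  match n, b0, b1, b2, b3 with
  | 0, false, false, false, false => [:: [:: 0]; [:: 2]; [:: 1]]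
  | 0, false, false, false, true => [:: [:: 0]; [:: 2]; [:: 1]; [:: 3]]
  | 0, false, false, true, false => [:: [:: 0]; [:: 3]; [:: 2]; [:: 1]]
  | 0, false, false, true, true => [:: [:: 0]; [:: 1; 3]]
  | 0, false, true, false, false => [:: [:: 0]; [:: 1]; [:: 3]; [:: 2]]
  | 0, false, true, false, true => [:: [:: 0]; [:: 1]]
  | 0, false, true, true, false => [:: [:: 0]; [:: 1]; [:: 2]]
  | 0, false, true, true, true => [:: [:: 0]; [:: 1]; [:: 2]; [:: 3]]
  | 0, true, false, false, false => [:: [:: 1]; [:: 0]; [:: 3]; [:: 2]]
  | 0, true, false, false, true => [:: [:: 1]; [:: 0]]
  | 0, true, false, true, false => [:: [:: 1]; [:: 0]; [:: 2]]
  | 0, true, false, true, true => [:: [:: 1]; [:: 0]; [:: 2]; [:: 3]]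
  | 0, true, true, false, false => [:: [:: 2]; [:: 1]; [:: 0]]
  | 0, true, true, false, true => [:: [:: 2]; [:: 1]; [:: 0]; [:: 3]]
  | 0, true, true, true, false => [:: [:: 3]; [:: 2]; [:: 1]; [:: 0]]
  | 0, true, true, true, true => [:: [:: 0; 2]; [:: 3]]
  | 1, false, false, false, false => [:: [:: 0]; [:: 2]; [:: 1]; [:: 4]; [:: 3]]
  | 1, false, false, false, true => [:: [:: 0]; [:: 2]; [:: 1]; [:: 4]]
  | 1, false, false, true, false => [:: [:: 0]; [:: 3]; [:: 2]; [:: 4]]
  | 1, false, false, true, true => [:: [:: 0]; [:: 4]; [:: 1]; [:: 3]; [:: 2]]
  | 1, false, true, false, false => [:: [:: 0]; [:: 1]; [:: 3]; [:: 4]]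
  | 1, false, true, false, true => [:: [:: 0]; [:: 2]; [:: 3]; [:: 4]; [:: 1]]
  | 1, false, true, true, false => [:: [:: 0]; [:: 1]; [:: 2]; [:: 4]; [:: 3]]
  | 1, false, true, true, true => [:: [:: 0]; [:: 1]; [:: 2]; [:: 4]]
  | 1, true, false, false, false => [:: [:: 1]; [:: 0]; [:: 3]; [:: 4]]
  | 1, true, false, false, true => [:: [:: 1]; [:: 4]; [:: 2]; [:: 0; 3]]
  | 1, true, false, true, false => [:: [:: 1]; [:: 0]; [:: 2]; [:: 4]; [:: 3]]
  | 1, true, false, true, true => [:: [:: 1]; [:: 0]; [:: 2]; [:: 4]]
  | 1, true, true, false, false => [:: [:: 2]; [:: 1]; [:: 0]; [:: 4]; [:: 3]]
  | 1, true, true, false, true => [:: [:: 2]; [:: 1]; [:: 0]; [:: 4]]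
  | 1, true, true, true, false => [:: [:: 3]; [:: 2]; [:: 1]; [:: 4]]
  | 1, true, true, true, true => [:: [:: 0; 2]; [:: 3]; [:: 4]; [:: 1]]
  | 2, false, false, false, false => [:: [:: 0]; [:: 2]; [:: 1]; [:: 4]; [:: 3]; [:: 5]]
  | 2, false, false, false, true => [:: [:: 0]; [:: 4]; [:: 1]; [:: 5]]
  | 2, false, false, true, false => [:: [:: 0]; [:: 4]; [:: 1]; [:: 5]; [:: 2]]
  | 2, false, false, true, true => [:: [:: 0]; [:: 4]; [:: 1]; [:: 3]; [:: 2]; [:: 5]]
  | 2, false, true, false, false => [:: [:: 2]; [:: 4]; [:: 3]; [:: 5]; [:: 0]]
  | 2, false, true, false, true => [:: [:: 0]; [:: 2]; [:: 3]; [:: 4]; [:: 1]; [:: 5]]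
  | 2, false, true, true, false => [:: [:: 0]; [:: 1]; [:: 2]; [:: 4]; [:: 3]; [:: 5]]
  | 2, false, true, true, true => [:: [:: 0]; [:: 4]; [:: 2]; [:: 5]; [:: 3]]
  | 2, true, false, false, false => [:: [:: 1]; [:: 4]; [:: 2]; [:: 5]; [:: 0]]
  | 2, true, false, false, true => [:: [:: 1]; [:: 4]; [:: 2]; [:: 5]; [:: 0]; [:: 3]]
  | 2, true, false, true, false => [:: [:: 1]; [:: 0]; [:: 2]; [:: 4]; [:: 3]; [:: 5]]
  | 2, true, false, true, true => [:: [:: 1]; [:: 4]; [:: 3]; [:: 5]; [:: 0]]
  | 2, true, true, false, false => [:: [:: 2]; [:: 1]; [:: 0]; [:: 4]; [:: 3]; [:: 5]]
  | 2, true, true, false, true => [:: [:: 2]; [:: 4]; [:: 0]; [:: 5]; [:: 3]]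
  | 2, true, true, true, false => [:: [:: 3]; [:: 4]; [:: 0]; [:: 5]; [:: 1]]
  | 2, true, true, true, true => [:: [:: 0; 2]; [:: 3]; [:: 4]; [:: 1]; [:: 5]]
  | _, _, _, _, _ => [::]
  end.

Lemma all_plans n b0 b1 b2 b3 : n <= 2 ->
  checkp (4+n) (pvec b0 b1 b2 b3) [::] (plan n b0 b1 b2 b3).
Proof. by case: n => [|[|[|]]] //; case: b0; case: b1; case: b2; case: b3. Qed.
Section Gen.
Variable T : finType.
Variable e : rel T.
Hypothesis e_sym : symmetric e.
Hypothesis e_irr : irreflexive e.

Lemma deg_split (W : {set T}) v :
  deg_in e (~: W) v + #|[set u in W | e v u]| = deg_in e setT v.
Proof.
rewrite /deg_in -(cardsID W [set u in setT | e v u]) addnC; congr (_ + _); apply: eq_card => u;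
by rewrite !inE; case: (u \in W); rewrite ?andbT ?andbF.
Qed.

Lemma cut_sum (S X : {set T}) : independent_in e S X ->
  cut_size e S X = \sum_(x in X) deg_in e S x.
Proof.
case=> XS ind; rewrite /cut_size.
rewrite (_ : [set p | _] = [set p : T * T | (p.1 \in X) && ((p.2 \in S) && e p.1 p.2)]); last first.
  apply/setP=> [[x y]]; rewrite !inE /=.
  case xX: (x \in X) => //=; case yX: (y \in X) => /=.
    by rewrite (negbTE (ind x y xX yX)) !andbF.
  by case: (y \in S); case: (e x y).
rewrite -sum1_card big_mkcond /=.
rewrite (eq_bigr (fun p : T * T => ((p.1 \in X) && ((p.2 \in S) && e p.1 p.2)) : nat)); last first.
  by move=> p _; rewrite inE; case: (_ && _).
rewrite -(pair_big xpredT xpredT (fun i j => ((i \in X) && ((j \in S) && e i j)) : nat)) /=.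
rewrite [RHS]big_mkcond /=; apply: eq_bigr => i _.
case: (i \in X) => /=; last by rewrite big1.
rewrite /deg_in -sum1_card [RHS]big_mkcond /=; apply: eq_bigr => j _.
by rewrite inE; case: (_ && _).
Qed.

Variable s : seq T.
Hypothesis s_uniq : uniq s.
Variable x0 : T.
Local Notation f := (nth x0 s).
Local Notation m := (size s).
Variable p : nat -> bool.
Hypothesis hadj : forall u v, u < m -> v < m -> e (f u) (f v) = adjA u v.
Hypothesis hp : forall u, u < m -> odd (deg_in e setT (f u)) = p u.

Definition F (Z : seq nat) : {set T} := [set x | x \in map f Z].
Definition act (Z : seq nat) := all (fun u => u < m) Z.

Lemma f_inj u v : u < m -> v < m -> f u = f v -> u = v.
Proof. by move=> hu hv /eqP; rewrite nth_uniq // => /eqP. Qed.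

Lemma mem_f Z u : act Z -> u < m -> (f u \in map f Z) = (u \in Z).
Proof.
move=> /allP aZ hu; apply/mapP/idP => [[w wZ /f_inj E]|uZ]; last by exists u.
by rewrite E // ?aZ.
Qed.

Lemma map_f_uniq Z : act Z -> uniq Z -> uniq (map f Z).
Proof.
move=> /allP aZ uZ; rewrite map_inj_in_uniq // => u v uZ' vZ'; apply: f_inj; exact: aZ.
Qed.

Lemma par_ok Z u : act Z -> uniq Z -> u < m -> odd (deg_in e (~: F Z) (f u)) = par p Z u.
Proof.
move=> aZ uZ hu.
have E : #|[set y in F Z | e (f u) y]| = count (adjA u) Z.
  rewrite (_ : [set y in F Z | e (f u) y] = [set y in filter (e (f u)) (map f Z)]); last first.
    by apply/setP=> y; rewrite !inE mem_filter andbC.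
  rewrite cardsE; move/card_uniqP: (filter_uniq (e (f u)) (map_f_uniq aZ uZ)) => ->.
  rewrite size_filter count_map; apply: eq_in_count => w wZ /=.
  by rewrite hadj // (allP aZ).
have := deg_split (F Z) (f u); rewrite E => H.
have := congr1 odd H; rewrite oddD hp // /par => <-.
by rewrite addbK.
Qed.

Lemma step Z Y : act Z -> uniq Z -> valid m p Z Y -> simple_admissible e (~: F Z) (F Y).
Proof.
move=> aZ uZ /and5P[/allP aY /allP nZ uY /allP ind ev].
have indep : independent_in e (~: F Z) (F Y).
  split.
    apply/subsetP=> x; rewrite !inE => /mapP[u uY1 ->].
    by rewrite mem_f // ?aY // nZ.
  move=> x y; rewrite !inE => /mapP[u uY1 ->] /mapP[v vY1 ->].
  by rewrite hadj ?aY // (allP (ind u uY1)).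
split => //; rewrite cut_sum //.
rewrite (eq_bigl (fun x => x \in map f Y)); last by move=> x; rewrite inE.
have aY' : act Y by apply/allP.
rewrite -big_uniq ?map_f_uniq // big_map.
rewrite (_ : odd _ = odd (count (par p Z) Y)) //.
elim: Y aY' {aY nZ uY ind ev indep} => [|u Y IH]; first by rewrite big_nil.
move=> /andP[hu aY]; rewrite big_cons oddD IH //= par_ok //.
by case: (par p Z u); rewrite //= oddD.
Qed.

Lemma chain pl Z : act Z -> uniq Z -> checkp m p Z pl ->
  [/\ admissible e (~: F Z) (F (flatten pl)), final m p (Z ++ flatten pl),
      uniq (Z ++ flatten pl) & act (Z ++ flatten pl)].
Proof.
elim: pl Z => [|Y pl IH] Z aZ uZ /=.
  move=> fin; rewrite cats0; split => //.
  rewrite (_ : F [::] = set0); first exact: adm_nil.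
  by apply/setP=> x; rewrite !inE.
move=> /andP[v ch].
have [aY nZ uY] : [/\ act Y, all (fun u => u \notin Z) Y & uniq Y].
  by case/and5P: v.
have aZY : act (Z ++ Y) by rewrite /act all_cat; apply/andP.
have uZY : uniq (Z ++ Y).
  rewrite cat_uniq uZ uY andbT /=; apply/hasPn => u uY1.
  by rewrite /= (allP nZ u uY1).
have [adm fin u2 a2] := IH _ aZY uZY ch.
rewrite !catA; split => //.
rewrite (_ : F (Y ++ flatten pl) = F Y :|: F (flatten pl)); last first.
  by apply/setP=> x; rewrite !inE map_cat mem_cat.
apply: adm_cons; first exact: step.
rewrite (_ : ~: F Z :\: F Y = ~: F (Z ++ Y)) //.
by apply/setP=> x; rewrite !inE map_cat mem_cat negb_or andbC.
Qed.

Lemma sound pl (R C : {set T}) : 4 <= m -> R = F (iota 0 4) -> C = F (iota 4 (m-4)) ->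
  checkp m p [::] pl ->
  exists X : {set T},
   (    [/\ C \subset X, X \subset C :|: R,
        admissible e [set: T] X,
        clique e (R :\: X) & #|R :\: X| <= 2] /\
        forall v, v \in R :\: X -> odd (deg_in e (~: X) v)).
Proof.
move=> m4 -> -> ch.
have [adm fin uZ aZ] := @chain pl [::] (erefl true) (erefl true) ch.
move: fin uZ aZ; rewrite /= => /and4P[/allP hC sz cl od] uZ aZ.
set Z := flatten pl in adm hC sz cl od uZ aZ *.
set Rem := [seq u <- iota 0 4 | u \notin Z] in sz cl od.
have lt4 : forall u, u \in iota 0 4 -> u < m.
  by move=> u; rewrite mem_iota => /andP[_ h]; exact: leq_trans h m4.
have ER : F (iota 0 4) :\: F Z = F Rem.
  apply/setP=> x; rewrite in_setD !in_set; apply/idP/idP => [/andP[xZ /mapP[u uI Ex]]|/mapP[u]].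
    subst x; apply/mapP; exists u => //; rewrite mem_filter uI andbT.
    by rewrite -(mem_f aZ (lt4 _ uI)).
  rewrite mem_filter => /andP[uZ' uI] ->; apply/andP; split; last by apply/mapP; exists u.
  by rewrite (mem_f aZ (lt4 _ uI)).
exists (F Z); split; [split|].
- by apply/subsetP=> x; rewrite !inE => /mapP[u uI ->]; apply/mapP; exists u => //; apply: hC.
- apply/subsetP=> x; rewrite in_setU !in_set => /mapP[u uZ' ->].
  have um := allP aZ u uZ'.
  case: (ltnP u 4) => u4.
    have uI : u \in iota 0 4 by rewrite mem_iota.
    by apply/orP; right; apply/mapP; exists u.
  apply/orP; left; apply/mapP; exists u; rewrite // mem_iota u4 /=.
  by rewrite subnKC.
- by rewrite (_ : [set: T] = ~: F [::]) //; apply/setP=> x; rewrite !inE.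
- rewrite ER => x y; rewrite !inE => /mapP[u uR ->] /mapP[v vR ->] nuv.
  have /orP[/eqP uv|] := allP (allP cl u uR) v vR; first by rewrite uv eqxx in nuv.
  have hu : u < m by move: uR; rewrite mem_filter => /andP[_ /lt4].
  have hv : v < m by move: vR; rewrite mem_filter => /andP[_ /lt4].
  by rewrite hadj.
- rewrite ER (leq_trans _ sz) // cardsE; by rewrite -(size_map f); exact: card_size.
- move=> v; rewrite ER inE => /mapP[u uR ->].
  have hu : u < m by move: uR; rewrite mem_filter => /andP[_ /lt4].
  by rewrite par_ok // (allP od).
Qed.

End Gen.
Theorem mainTheorem20 (T : finType) (e : rel T)
    (e_sym : symmetric e) (e_irr : irreflexive e)
    (R C : {set T}) :
  induced_P3 e R ->
  [disjoint C & R] ->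
  clique e C -> #|C| <= 2 ->
  (forall v, v \in C -> odd (deg_in e [set: T] v)) ->
  (forall r c, r \in R -> c \in C -> e r c) ->
  exists X : {set T},
   (    [/\ C \subset X, X \subset C :|: R,
        admissible e [set: T] X,
        clique e (R :\: X) & #|R :\: X| <= 2] /\
        forall v, v \in R :\: X -> odd (deg_in e (~: X) v)).
Proof.
move=> [a [b [c [d [ER uR [ab bc cd] [nac nbd nad]]]]]] dCR clC szC oddC RC.
set Cs := enum C.
set s := [:: a; b; c; d] ++ Cs.
have sizes : size s = 4 + #|C| by rewrite size_cat cardE.
have inR : forall i, i < 4 -> nth a s i \in R.
  by move=> [|[|[|[|i]]]] // _; rewrite ER !inE eqxx ?orbT.
have inC : forall i, 4 <= i -> i < size s -> nth a s i \in C.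
  move=> i h4 hs; rewrite nth_cat /= ltnNge h4 /= -mem_enum -/Cs mem_nth //.
  by rewrite -(ltn_add2l 4) subnKC // -sizes.
have us : uniq s.
  rewrite cat_uniq uR enum_uniq andbT /=; apply/hasPn => x; rewrite mem_enum => xC.
  apply/negP => xR; have : x \in R.
    by rewrite ER; move: xR; rewrite !inE !orbA.
  by rewrite (disjointFr dCR xC).
set p := pvec (odd (deg_in e setT a)) (odd (deg_in e setT b))
              (odd (deg_in e setT c)) (odd (deg_in e setT d)).
have eba : e b a by rewrite e_sym.
have ecb : e c b by rewrite e_sym.
have edc : e d c by rewrite e_sym.
have nca : ~~ e c a by rewrite e_sym.
have ndb : ~~ e d b by rewrite e_sym.
have nda : ~~ e d a by rewrite e_sym.
have hadj : forall u v, u < size s -> v < size s -> e (nth a s u) (nth a s v) = adjA u v.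
  move=> u v hu hv; rewrite /adjA.
  case: (ltnP u 4) => u4; case: (ltnP v 4) => v4 /=.
  - move: u v u4 v4 {hu hv}; move=> [|[|[|[|u]]]] [|[|[|[|v]]]] //= _ _.
    all: try by rewrite ?e_irr ?ab ?bc ?cd ?eba ?ecb ?edc ?(negbTE nac) ?(negbTE nbd) ?(negbTE nad)
            ?(negbTE nca) ?(negbTE ndb) ?(negbTE nda).
  - rewrite RC ?inR ?inC //; apply/esym/negP => /eqP uv; subst; by rewrite ltnNge v4 in u4.
  - rewrite e_sym RC ?inR ?inC //; apply/esym/negP => /eqP uv; subst; by rewrite ltnNge u4 in v4.
  - have [->|uv] := eqVneq u v; first by rewrite e_irr.
    apply: clC; rewrite ?inC // nth_uniq //.
have hp : forall u, u < size s -> odd (deg_in e setT (nth a s u)) = p u.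
  move=> u hu; case: (ltnP u 4) => u4.
    by move: u u4 {hu}; move=> [|[|[|[|u]]]].
  rewrite oddC ?inC // /p /pvec nth_default //.
have hRF : R = F s a (iota 0 4).
  by rewrite ER; apply/setP=> x; rewrite !inE -!orbA.
have hCF : C = F s a (iota 4 (size s - 4)).
  rewrite sizes addKn; apply/setP=> x; rewrite /F inE.
  rewrite (_ : iota 4 #|C| = map (addn 4) (iota 0 #|C|)); last by rewrite -iotaDl.
  rewrite -map_comp (eq_map (g := nth a Cs)); last first.
    by move=> i /=; rewrite add0n.
  by rewrite cardE -/Cs -/(mkseq _ _) mkseq_nth -mem_enum.
have ch := all_plans (odd (deg_in e setT a)) (odd (deg_in e setT b))
              (odd (deg_in e setT c)) (odd (deg_in e setT d)) szC.
rewrite -sizes in ch.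
apply: (sound us hadj hp _ hRF hCF ch).
by rewrite sizes.
Qed.
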